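(* Let $p, q$ be primes and $n, r \geq 1$ integers such that $p^n < qp^r$, $q$ divides $p^n - 1$, and $p^r$ divides $n$. Then exactly one of the following holds: (1) $p = 2$, $q = 3$, $n = 2$, $r = 1$; (2) $p = 2$, $q = 5$, $n = 4$, $r = 2$; (3) $p > 2$, $q = (p^p - 1)/(p-1)$, $n = p$, $r = 1$. *)

(* Defs.v *)
From mathcomp Require Import all_boot.

(* Main.v *)
Require Import Defs.
From mathcomp Require Import all_boot.
From mathcomp Require Import zify.

Lemma fact_exp (x p : nat) : exists S, x ^ p - 1 = (x - 1) * S.
Proof. by exists (\sum_(i < p) x ^ (p.-1 - i) * 1 ^ i); rewrite -subn_exp exp1n. Qed.

Lemma pow_ge (p r : nat) : 1 < p -> r <= p ^ r.-1.
Proof.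
move=> Hp; case: r => [//|r] /=.
by have := ltn_expl r Hp.
Qed.

Lemma pow_ge2 (r : nat) : 2 < r -> r < 2 ^ r.-1.
Proof.
case: r => [//|[//|[//|r]]] _ /=.
have := ltn_expl r (isT : 1 < 2).
rewrite !expnS; lia.
Qed.

Lemma hA x p z : 1 < x -> 1 < p -> x*z - 1 <= p*z*(x-1).
Proof.
case: x => [|[|k]] // _ hp.
have := leq_mul (leq_mul hp (leqnn z)) (leqnn k.+1).
rewrite subn1 /=. nia. Qed.
Lemma hB p m r : 0 < p -> r < m -> (p.-1*m).+1 + r <= m*p.
Proof. case: p => // p _ /= h. rewrite mulnS (mulnC m); lia. Qed.

Theorem lemma6 (p q n r : nat) :
  prime p -> prime q -> 1 <= n -> 1 <= r ->
  p ^ n < q * p ^ r -> q %| p ^ n - 1 -> p ^ r %| n ->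
  let C1 := [/\ p = 2, q = 3, n = 2 & r = 1] in
  let C2 := [/\ p = 2, q = 5, n = 4 & r = 2] in
  let C3 := [/\ 2 < p, q = (p ^ p - 1) %/ (p - 1), n = p & r = 1] in
  [\/ C1 /\ ~ C2 /\ ~ C3, ~ C1 /\ C2 /\ ~ C3 | ~ C1 /\ ~ C2 /\ C3].
Proof.
move=> pp pq n1 r1 hlt hq hdiv C1 C2 C3.
have p2 : 1 < p := prime_gt1 pp.
have q2 : 1 < q := prime_gt1 pq.
have pn : p %| n := dvdn_trans (dvdn_exp r1 (dvdnn p)) hdiv.
have prn : p ^ r <= n := dvdn_leq n1 hdiv.
set m := n %/ p.
have nm : n = m * p by rewrite divnK.
have hm : p ^ r.-1 <= m.
  rewrite -(@leq_pmul2r p) ?(ltnW p2) // -nm -expnSr prednK //.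
have rm : r <= m := leq_trans (pow_ge p r p2) hm.
set x := p ^ m.
have m1 : 0 < m by lia.
have x2 : 1 < x by rewrite /x (leq_trans p2) // -{1}(expn1 p) leq_pexp2l // ltnW.
have pnx : p ^ n = x ^ p by rewrite nm expnM.
have [S hS] := fact_exp x p.
rewrite pnx hS Euclid_dvdM // in hq.
(* q does not divide x - 1 *)
have hqS : q %| S.
  case/orP: hq => // hq.
  have := dvdn_leq (ltac:(lia) : 0 < x - 1) hq => hqx.
  have : q * p ^ r <= p ^ n.
    apply: leq_trans (_ : x * p ^ r <= _).
      rewrite leq_pmul2r ?expn_gt0 ?(ltnW p2) //; lia.
    rewrite /x -expnD leq_pexp2l ?(ltnW p2) //.
    have : 2 * m <= p * m by rewrite leq_pmul2r; lia.
    lia.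
  lia.
have xp : x ^ p = x * x ^ p.-1 by rewrite -expnS prednK // ltnW.
have Sle : S <= p * x ^ p.-1.
  have hx : x ^ p.-1 >= 1 by rewrite expn_gt0; lia.
  rewrite -(@leq_pmul2r (x - 1)); last lia.
  rewrite mulnC -hS xp.
  exact: hA.
have mr : m <= r.
  rewrite leqNgt; apply/negP => mr.
  have qS := dvdn_leq (ltac:(lia) : 0 < S) hqS.
  have : S * p ^ r <= p ^ n.
    apply: leq_trans (_ : p ^ ((p.-1 * m).+1) * p ^ r <= _).
      rewrite leq_pmul2r ?expn_gt0 ?(ltnW p2) //.
      apply: leq_trans Sle _.
      by rewrite expnS /x -expnM (mulnC m).
    rewrite -expnD leq_pexp2l ?(ltnW p2) //.
    by rewrite nm; apply: hB; lia.
  have : q * p ^ r <= S * p ^ r by rewrite leq_pmul2r ?expn_gt0 ?(ltnW p2).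
  lia.
have hr : p ^ r.-1 <= r := leq_trans hm mr.
have emr : m = r by apply/eqP; rewrite eqn_leq mr rm.
have r2 : r <= 2.
  rewrite leqNgt; apply/negP => r3.
  have := pow_ge2 r r3.
  have : 2 ^ r.-1 <= p ^ r.-1 by rewrite leq_exp2r; lia.
  lia.
have Spos : 0 < S.
  have : 0 < x ^ p - 1.
    rewrite subn_gt0 (leq_trans x2) // -{1}(expn1 x) leq_pexp2l //; lia.
  rewrite hS muln_gt0; lia.
have qS := dvdn_leq Spos hqS.
case: (ltngtP r 1) => hr1; first by lia.
-
  have er2 : r = 2 by lia.
  have ep : p = 2.
    have : p ^ r.-1 <= 2 by lia.
    rewrite er2 /=.
    rewrite expn1; lia.
  have en : n = 4 by rewrite nm emr er2 ep.
  have ex : x = 4 by rewrite /x emr er2 ep.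
  move: hS hlt; rewrite ex en ep er2 /= => hS hlt.
  have eS : S = 5 by lia.
  have eq5 : q = 5.
    rewrite eS in hqS qS.
    lia.
  apply: Or32; split; first by rewrite /C1 /C2 /C3; case; lia.
  split; first by rewrite /C2 en ep eq5 er2.
  by rewrite /C1 /C2 /C3; case; lia.
-
  have er : r = 1 by [].
  have en : n = p by rewrite nm emr er mul1n.
  have ex : x = p by rewrite /x emr er expn1.
  rewrite ex in hS.
  have [ep | p3] := eqVneq p 2.
    move: hS hlt; rewrite en ep er /= => hS hlt.
    have eS : S = 3 by lia.
    rewrite eS in hqS qS.
    have eq3 : q = 3.
      lia.
    apply: Or31; split; first by rewrite /C1 en ep eq3 er.
    by split; rewrite /C1 /C2 /C3; case; lia.
  have p3' : 2 < p by lia.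
  clear -p2 q2 hS hlt hqS Spos en er p3'.
  have eSd : S = (p ^ p - 1) %/ (p - 1) by rewrite hS mulKn //; lia.
  have xp' : p ^ p = p ^ p.-1 * p by rewrite -expnSr prednK // ltnW.
  have zpos : 0 < p ^ p.-1 by rewrite expn_gt0; lia.
  have hz : p ^ p.-1 < q.
    rewrite -(@ltn_pmul2r p) ?(ltnW p2) // -xp'.
    by rewrite en er expn1 in hlt.
  have hS2 : S < 2 * p ^ p.-1.
    rewrite -(@ltn_pmul2r (p - 1)); last lia.
    rewrite mulnC -hS xp'.
    move: zpos p3'; clear; set z := p ^ p.-1 => zpos p3'.
    have : z * p <= 2 * z * (p - 1).
      rewrite (mulnC 2) -mulnA leq_pmul2l //; lia.
    lia.
  have eqS : q = S.
    case/dvdnP: hqS => k hk.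
    have k1 : 0 < k by move: Spos; rewrite hk muln_gt0 => /andP[].
    have k2 : k < 2.
      rewrite ltnNge; apply/negP => k2.
      have : 2 * q <= k * q by rewrite leq_pmul2r; lia.
      lia.
    have k1' : k = 1 by lia.
    by rewrite hk k1' mul1n.
  apply: Or33; split; first by rewrite /C1 /C2 /C3; case; lia.
  split; first by rewrite /C1 /C2 /C3; case; lia.
  by rewrite /C3; split => //; rewrite eqS.
Qed.
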